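(* Let $K$ be a field with a non-trivial non-Archimedean valuation $|\cdot|$, let $X$ be a complete non-Archimedean normed space over $K$, fix $k\in\mathbb N$ with $|2k^3|\neq0$, and for $f:G\to X$ let $$Df(x,y)=f(kx+y)+f(kx-y)-k[f(x+y)+f(x-y)]-2(k^3-k)f(x).$$ Let $\alpha:[0,\infty)\to[0,\infty)$ be a function satisfying (i) $\alpha(|k|t)\le\alpha(|k|)\alpha(t)$ for all $t\ge0$, and (ii) $\alpha(|k|)<|k|^3$. Let $\delta>0$, let $G$ be a normed space, and let $f:G\to X$ satisfy $$\|Df(x,y)\|\le\delta[\alpha(\|x\|)+\alpha(\|y\|)]\quad\text{for all }x,y\in G.$$ Then there exists a unique cubic mapping $C:G\to X$ (i.e. $DC(x,y)=0$ for all $x,y\in G$) such that $$\|f(x)-C(x)\|\le\frac{1}{|2k^3|}\delta\,\alpha(\|x\|)\quad\text{for all }x\in G.$$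
   Context: A non-Archimedean field is a field $K$ with $|\cdot|:K\to[0,\infty)$ such that $|r|=0$ iff $r=0$, $|rs|=|r||s|$, $|r+s|\le\max\{|r|,|s|\}$. A non-Archimedean norm on a $K$-vector space satisfies $\|x\|=0$ iff $x=0$, $\|rx\|=|r|\|x\|$, $\|x+y\|\le\max\{\|x\|,\|y\|\}$. Integers are regarded as elements of $K$ and $|k|$ is the valuation of $k$ in $K$. *)

(* Defs.v *)
From HB Require Import structures.
From mathcomp Require Import all_boot all_order all_algebra.
From mathcomp Require Import reals.
Set Implicit Arguments. Unset Strict Implicit. Unset Printing Implicit Defensive.
Import Order.TTheory GRing.Theory Num.Theory.
Local Open Scope ring_scope.

Definition nonarch_abs (R : realType) (K : fieldType) (abs : K -> R) : Prop :=
  (forall r, 0 <= abs r) /\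
  (forall r, abs r = 0 <-> r = 0) /\
  (forall r s, abs (r * s) = abs r * abs s) /\
  (forall r s, abs (r + s) <= Num.max (abs r) (abs s)).

Definition nontrivial_abs (R : realType) (K : fieldType) (abs : K -> R) : Prop :=
  exists r : K, abs r <> 0 /\ abs r <> 1.

Definition nonarch_norm (R : realType) (K : fieldType) (abs : K -> R)
  (X : lmodType K) (nrm : X -> R) : Prop :=
  (forall x, 0 <= nrm x) /\
  (forall x, nrm x = 0 <-> x = 0) /\
  (forall (r : K) x, nrm (r *: x) = abs r * nrm x) /\
  (forall x y, nrm (x + y) <= Num.max (nrm x) (nrm y)).

Definition is_norm (R : realType) (K : fieldType) (abs : K -> R)
  (G : lmodType K) (nrm : G -> R) : Prop :=
  (forall x, 0 <= nrm x) /\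
  (forall x, nrm x = 0 <-> x = 0) /\
  (forall (r : K) x, nrm (r *: x) = abs r * nrm x) /\
  (forall x y, nrm (x + y) <= nrm x + nrm y).

Definition cauchy_seq (R : realType) (K : fieldType) (X : lmodType K)
  (nrm : X -> R) (u : nat -> X) : Prop :=
  forall eps : R, 0 < eps -> exists N : nat, forall m n : nat,
    (N <= m)%N -> (N <= n)%N -> nrm (u m - u n) < eps.

Definition converges_to (R : realType) (K : fieldType) (X : lmodType K)
  (nrm : X -> R) (u : nat -> X) (l : X) : Prop :=
  forall eps : R, 0 < eps -> exists N : nat, forall n : nat,
    (N <= n)%N -> nrm (u n - l) < eps.

Definition complete_normed (R : realType) (K : fieldType) (X : lmodType K)
  (nrm : X -> R) : Prop :=
  forall u : nat -> X, cauchy_seq nrm u -> exists l, converges_to nrm u l.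

Definition Dk (K : fieldType) (G X : lmodType K) (k : nat) (f : G -> X)
  (x y : G) : X :=
  f ((k%:R : K) *: x + y) + f ((k%:R : K) *: x - y)
  - (k%:R : K) *: (f (x + y) + f (x - y))
  - (2 * ((k ^ 3)%:R - k%:R) : K) *: f x.

Definition cubic_map (K : fieldType) (G X : lmodType K) (k : nat) (C : G -> X) : Prop :=
  forall x y, Dk k C x y = 0.

(* Main.v *)
Require Import Defs.
From HB Require Import structures.
From mathcomp Require Import all_boot all_order all_algebra.
From mathcomp Require Import reals.
From mathcomp Require Import ring lra zify.
From Stdlib Require Import FunctionalExtensionality ClassicalEpsilon.
Import Order.TTheory GRing.Theory Num.Theory.
Local Open Scope ring_scope.
Set Implicit Arguments.

Lemma bern (R : realType) (d : R) (n : nat) : 0 <= d -> 1 + n%:R * d <= (1 + d) ^+ n.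
Proof.
move=> d0; elim: n => [|n IH]; first by rewrite mul0r addr0 expr0.
rewrite exprS -natr1.
have h1 : 0 <= n%:R * d by apply: mulr_ge0.
have : (1 + d) * (1 + n%:R * d) <= (1 + d) * (1 + d) ^+ n.
  by apply: ler_wpM2l => //; lra.
have : 0 <= d * (n%:R * d) by apply: mulr_ge0.
lra.
Qed.

Lemma geo (R : realType) (r e : R) : 0 <= r -> r < 1 -> 0 < e -> exists N : nat, r ^+ N < e.
Proof.
move=> r0 r1 e0.
have [->|rn0] := eqVneq r 0; first by exists 1%N; rewrite expr1.
have rp : 0 < r by rewrite lt_def rn0 r0.
set d := r^-1 - 1.
have d0 : 0 < d.
  rewrite /d subr_gt0 -[ltRHS]mul1r ltr_pdivlMr //. by rewrite mul1r.
set M := (e^-1 / d).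
have M0 : 0 <= M by rewrite /M divr_ge0 // ?invr_ge0 ltW.
exists (Num.Def.archi_bound M).
have hb := archi_boundP M0.
set N := Num.Def.archi_bound M in hb *.
have h1 := @bern R d N (ltW d0).
have : e^-1 < N%:R * d.
  by rewrite -ltr_pdivrMr.
have hrr : 1 + d = r^-1 by rewrite /d; lra.
rewrite hrr in h1.
move=> h2.
have h3 : e^-1 < (r^-1) ^+ N by lra.
rewrite exprVn in h3.
rewrite -[_ < e]ltf_pV2 ?posrE ?exprn_gt0 //.
Qed.
Lemma subsubACA (V : zmodType) (a b c d : V) : (a - b) - (c - d) = (a - c) - (b - d).
Proof. by rewrite opprB [d - c]addrC addrACA [- b + d]addrC opprB. Qed.
Lemma addsubACA (V : zmodType) (a b c d : V) : (a + b) - (c + d) = (a - c) + (b - d).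
Proof. by rewrite opprD addrACA. Qed.

Lemma Dk_sub (K : fieldType) (G X : lmodType K) (k : nat) (g h : G -> X) x y :
  Dk k g x y - Dk k h x y = Dk k (fun z => g z - h z) x y.
Proof.
rewrite /Dk /=.
by rewrite [X in X = _]subsubACA [X in X - _ = _]subsubACA -!scalerBr !addsubACA.
Qed.
Lemma abs_facts (R : realType) (K : fieldType) (abs : K -> R) : nonarch_abs abs ->
  [/\ abs 0 = 0, abs 1 = 1, abs (-1) = 1, forall x, abs (- x) = abs x &
      forall x, x != 0 -> abs (x^-1) = (abs x)^-1].
Proof.
move=> [h0 [hz [hm hu]]].
have a0 : abs 0 = 0 by apply/hz.
have a1 : abs 1 = 1.
  have hn : abs 1 != 0 by apply/eqP => /hz /eqP; rewrite oner_eq0.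
  have := hm 1 1; rewrite mulr1 => e.
  by apply: (mulfI hn); rewrite mulr1 -e.
have am1 : abs (-1) = 1.
  have := hm (-1) (-1); rewrite mulrNN mulr1 a1 => e.
  have := h0 (-1); set t := abs (-1) in e *.
  move=> t0. have : (t - 1) * (t + 1) = 0 by rewrite -[t * t]/(t ^+ 2) in e; nra.
  move/eqP; rewrite mulf_eq0 => /orP [/eqP|/eqP]; lra.
split => //.
  by move=> x; rewrite -mulN1r hm am1 mul1r.
move=> x xn0.
have hx : abs x != 0 by apply/eqP => /hz /eqP; rewrite (negbTE xn0).
have := hm x x^-1; rewrite mulfV // a1 => e.
by apply: (mulfI hx); rewrite -e mulfV.
Qed.

Lemma abs_exp (R : realType) (K : fieldType) (abs : K -> R) : nonarch_abs abs ->
  forall x n, abs (x ^+ n) = abs x ^+ n.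
Proof.
move=> H; have [_ a1 _ _ _] := abs_facts H; case: H => [_ [_ [hm _]]].
by move=> x; elim=> [|n IH]; rewrite ?expr0 // !exprS hm IH.
Qed.

Lemma abs_nat (R : realType) (K : fieldType) (abs : K -> R) : nonarch_abs abs ->
  forall n, abs (n%:R) <= 1.
Proof.
move=> H; have [a0 a1 _ _ _] := abs_facts H; case: H => [h0 [_ [_ hu]]].
elim=> [|n IH]; first by rewrite a0.
rewrite -natr1; apply: le_trans (hu _ _) _.
by rewrite ge_max IH a1 lexx.
Qed.

Lemma abs_natB (R : realType) (K : fieldType) (abs : K -> R) : nonarch_abs abs ->
  forall m n, abs (m%:R - n%:R) <= 1.
Proof.
move=> H m n; have [a0 a1 _ aN _] := abs_facts H; have hn := abs_nat H.
case: H => [h0 [_ [_ hu]]].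
apply: le_trans (hu _ _) _; by rewrite ge_max hn aN hn.
Qed.

Lemma nrm_facts (R : realType) (K : fieldType) (abs : K -> R) (X : lmodType K) (nrm : X -> R) :
  nonarch_abs abs -> nonarch_norm abs nrm ->
  [/\ nrm 0 = 0, forall u, nrm (- u) = nrm u,
      forall u v e, nrm u <= e -> nrm v <= e -> nrm (u + v) <= e,
      forall u v e, nrm u <= e -> nrm v <= e -> nrm (u - v) <= e &
      forall c u e, abs c <= 1 -> nrm u <= e -> nrm (c *: u) <= e].
Proof.
move=> HA [n0 [nz [ns nu]]]; have [a0 a1 am1 aN _] := abs_facts HA.
have nN : forall u, nrm (- u) = nrm u by move=> u; rewrite -scaleN1r ns am1 mul1r.
have nD : forall u v e, nrm u <= e -> nrm v <= e -> nrm (u + v) <= e.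
  by move=> u v e hu hv; apply: le_trans (nu _ _) _; rewrite ge_max hu hv.
split => //.
- by apply/nz.
- by move=> u v e hu hv; apply: nD => //; rewrite nN.
- move=> c u e hc hu; rewrite ns.
  case: HA => [h0 _].
  apply: le_trans hu; rewrite -[leRHS]mul1r; apply: ler_wpM2r => //.
Qed.
Lemma Dk_scale (K : fieldType) (G X : lmodType K) (k : nat) (g : G -> X) (c s : K) x y :
  Dk k (fun z => c *: g (s *: z)) x y = c *: Dk k g (s *: x) (s *: y).
Proof.
rewrite /Dk /= !(scalerBr s) !(scalerDr s).
have e : s *: ((k%:R : K) *: x) = (k%:R : K) *: (s *: x) by rewrite !scalerA mulrC.
rewrite e !(scalerBr c) !(scalerDr c) !scalerA.
by rewrite [c * k%:R]mulrC [c * (2 * _)]mulrC -[(k%:R * c) *: _]scalerA (scalerDr c).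
Qed.

Lemma Dk_y0 (K : fieldType) (G X : lmodType K) (k : nat) (g : G -> X) x :
  Dk k g x 0 = 2 *: g ((k%:R : K) *: x) - (2 * (k%:R : K) ^+ 3) *: g x.
Proof.
rewrite /Dk !addr0 !subr0 -!mulr2n -!scaler_nat scalerA -addrA -opprD -scalerDl.
congr (_ - _ *: _); rewrite natrX; ring.
Qed.

Lemma Dk_bound (R : realType) (K : fieldType) (abs : K -> R) (G X : lmodType K) (nrm : X -> R)
  (k : nat) (g : G -> X) x y e :
  nonarch_abs abs -> nonarch_norm abs nrm ->
  nrm (g ((k%:R : K) *: x + y)) <= e -> nrm (g ((k%:R : K) *: x - y)) <= e ->
  nrm (g (x + y)) <= e -> nrm (g (x - y)) <= e -> nrm (g x) <= e ->
  nrm (Dk k g x y) <= e.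
Proof.
move=> HA HN h1 h2 h3 h4 h5.
case: (nrm_facts HA HN) => n0 nN nD nB nS.
rewrite /Dk; apply: (nB); first apply: (nB).
- exact: (nD).
- by apply: (nS); [apply: abs_nat | apply: (nD)].
- apply: (nS) => //.
  case: HA => [h0 [hz [hm hu]]]; rewrite hm.
  rewrite -[leRHS]mul1r; apply: ler_pM => //; first exact: abs_nat.
  by apply: abs_natB.
Qed.
Theorem corollary2p2 (R : realType) (K : fieldType) (abs : K -> R)
  (X : lmodType K) (nrmX : X -> R) (G : lmodType K) (nrmG : G -> R)
  (k : nat) (alpha : R -> R) (delta : R) (f : G -> X) :
  nonarch_abs abs -> nontrivial_abs abs ->
  nonarch_norm abs nrmX -> complete_normed nrmX ->
  is_norm abs nrmG ->
  abs (2 * (k ^ 3)%:R) != 0 ->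
  (forall t, 0 <= t -> 0 <= alpha t) ->
  (forall t, 0 <= t -> alpha (abs k%:R * t) <= alpha (abs k%:R) * alpha t) ->
  alpha (abs k%:R) < abs k%:R ^+ 3 ->
  0 < delta ->
  (forall x y, nrmX (Dk k f x y) <= delta * (alpha (nrmG x) + alpha (nrmG y))) ->
  exists C : G -> X,
    [/\ cubic_map k C,
        (forall x, nrmX (f x - C x) <= (abs (2 * (k ^ 3)%:R))^-1 * delta * alpha (nrmG x))
      & (forall C' : G -> X, cubic_map k C' ->
           (forall x, nrmX (f x - C' x) <= (abs (2 * (k ^ 3)%:R))^-1 * delta * alpha (nrmG x)) ->
           C' = C)].
Proof.
move=> HA _ HN HC HG H2k al0 alM alk de0 HD.
have [a0 a1 am1 aN aV] := abs_facts HA.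
have [n0 nN nD nB nS] := nrm_facts HA HN.
have [nx0 [nxz [nxs nxu]]] := HN.
have [g0 [gz [gs gu]]] := HG.
have nG0 : nrmG 0 = 0 by apply/gz.
have [ab0 [abz [abm abu]]] := HA.
have aX := abs_exp HA.
set kk : K := k%:R.
set L := abs (2 * (k ^ 3)%:R).
set t : K := 2 * kk ^+ 3.
have tE : (2 * (k ^ 3)%:R : K) = t by rewrite /t natrX.
have Lt : L = abs t by rewrite /L tE.
have tn0 : t != 0 by apply/eqP => e; move: H2k; rewrite tE e a0 eqxx.
have L0 : 0 < L by rewrite lt_def H2k ab0.
have kn0 : kk != 0 by apply/eqP => e; move: tn0; rewrite /t e expr0n mulr0 eqxx.
have twon0 : (2 : K) != 0 by apply/eqP => e; move: tn0; rewrite /t e mul0r eqxx.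
set a := abs kk.
have apos : 0 < a by rewrite lt_def ab0 andbT; apply/eqP => /abz /eqP; rewrite (negbTE kn0).
have ale1 : a <= 1 by apply: abs_nat.
have a3le1 : a ^+ 3 <= 1 by apply: exprn_ile1 => //; apply: ltW.
have a3pos : 0 < a ^+ 3 by apply: exprn_gt0.
set q := alpha a.
have q0 : 0 <= q by apply: al0; apply: ltW.
have alpha00 : alpha 0 = 0.
  have h := alM 0 (lexx 0); rewrite mulr0 in h.
  have h0 := al0 0 (lexx 0).
  have : q < 1 by apply: lt_le_trans alk a3le1.
  move=> hq; apply/eqP; rewrite eq_le h0 andbT.
  have : alpha 0 * (1 - q) <= 0 by rewrite mulrBr mulr1; rewrite subr_le0 mulrC.
  rewrite pmulr_lle0 // subr_gt0 //.
have alN : forall n s, 0 <= s -> alpha (a ^+ n * s) <= q ^+ n * alpha s.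
  elim=> [|n IH] s s0; first by rewrite !expr0 !mul1r.
  rewrite !exprS -!mulrA.
  apply: le_trans (alM _ _) _; first by apply: mulr_ge0 => //; apply: exprn_ge0; apply: ltW.
  by apply: ler_wpM2l => //; apply: IH.
have gN : forall n x, nrmG (kk ^+ n *: x) = a ^+ n * nrmG x by move=> n x; rewrite gs aX.
set r := q / a ^+ 3.
have r0 : 0 <= r by apply: divr_ge0 => //; apply: ltW.
have r1 : r < 1 by rewrite /r ltr_pdivrMr // mul1r.
set c : K := (kk ^+ 3)^-1.
have k3n0 : kk ^+ 3 != 0 by apply: expf_neq0.
have ac : abs c = (a ^+ 3)^-1 by rewrite /c aV // aX.
have acn : forall n, abs (c ^+ n) = ((a ^+ 3)^-1) ^+ n by move=> n; rewrite aX ac.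
set B := fun x => L^-1 * delta * alpha (nrmG x).
have B0 : forall x, 0 <= B x.
  move=> x; rewrite /B; apply: mulr_ge0; first apply: mulr_ge0.
  - by rewrite invr_ge0 ltW.
  - exact: ltW.
  - exact: al0.
have nDk : forall x y, nrmX (Dk k f x y) <= delta * (alpha (nrmG x) + alpha (nrmG y)) := HD.
have step : forall x, nrmX (c *: f (kk *: x) - f x) <= B x.
  move=> x.
  have e : c *: f (kk *: x) - f x = t^-1 *: Dk k f x 0.
    rewrite Dk_y0 -/kk scalerBr !scalerA mulVf // scale1r.
    congr (_ *: _ - _); rewrite /c /t; field; by rewrite kn0 twon0.
  rewrite e nxs aV // -Lt.
  have := HD x 0; rewrite nG0 alpha00 addr0 => h.
  rewrite /B -mulrA; apply: ler_wpM2l => //; by rewrite invr_ge0 ltW.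
set fs := fun (n : nat) (x : G) => c ^+ n *: f (kk ^+ n *: x).
have shift : forall (g : G -> X) n x,
    c ^+ n.+1 *: g (kk ^+ n.+1 *: x) = c ^+ n *: (c *: g (kk *: (kk ^+ n *: x))).
  by move=> g n x; rewrite exprSr exprS -!scalerA.
have ainv0 : forall n, 0 <= ((a ^+ 3)^-1) ^+ n by move=> n; apply: exprn_ge0; rewrite invr_ge0 ltW.
have scB : forall n x, ((a ^+ 3)^-1) ^+ n * B (kk ^+ n *: x) <= r ^+ n * B x.
  move=> n x; rewrite /B gN /r exprMn [q ^+ n * _]mulrC -!mulrA.
  apply: ler_wpM2l; first by apply: exprn_ge0; rewrite invr_ge0 ltW.
  rewrite [leRHS]mulrCA; apply: ler_wpM2l; first by rewrite invr_ge0 ltW.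
  rewrite [leRHS]mulrCA; apply: ler_wpM2l; first by apply: ltW.
  by apply: alN.
have diff : forall n x, nrmX (fs n.+1 x - fs n x) <= r ^+ n * B x.
  move=> n x; rewrite /fs shift -scalerBr nxs acn.
  apply: le_trans (ler_wpM2l _ (step _)) _; first exact: ainv0.
  exact: scB.
have rle : forall n m, (n <= m)%N -> r ^+ m <= r ^+ n.
  by move=> n m nm; apply: ler_wiXn2l => //; apply: ltW.
have tele : forall x n i, nrmX (fs (n + i)%N x - fs n x) <= r ^+ n * B x.
  move=> x n; elim=> [|i IH].
    rewrite addn0 subrr n0; apply: mulr_ge0 => //; exact: exprn_ge0.
  have e : fs (n + i.+1)%N x - fs n x = (fs (n + i).+1 x - fs (n + i)%N x) + (fs (n + i)%N x - fs n x).
    by rewrite addrA subrK addnS.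
  rewrite e; apply: nD => //; apply: le_trans (diff _ _) _.
  apply: ler_wpM2r => //; apply: rle; exact: leq_addr.
have small : forall b eps, 0 <= b -> 0 < eps -> exists N : nat, forall n, (N <= n)%N -> r ^+ n * b < eps.
  move=> b eps b0 e0.
  have hb1 : 0 < b + 1 by lra.
  have [N hN] := @geo R r (eps / (b + 1)) r0 r1 (divr_gt0 e0 hb1).
  exists N => n Nn.
  apply: le_lt_trans (_ : _ <= r ^+ N * b) _.
    by apply: ler_wpM2r => //; apply: rle.
  apply: le_lt_trans (_ : _ <= r ^+ N * (b + 1)) _.
    by apply: ler_wpM2l; [apply: exprn_ge0 | lra].
  by rewrite -ltr_pdivlMr.
have fs0 : forall x, fs 0%N x = f x by move=> x; rewrite /fs !expr0 scale1r scale1r.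
have nsym : forall u v, nrmX (u - v) = nrmX (v - u) by move=> u v; rewrite -nN opprB.
have cauchy : forall x, cauchy_seq nrmX (fun n => fs n x).
  move=> x eps e0.
  have [N hN] := small (B x) eps (B0 x) e0.
  exists N => m n Nm Nn /=.
  have [nm|mn] := leqP n m.
    rewrite -(subnKC nm); apply: le_lt_trans (tele _ _ _) _; exact: hN.
  rewrite nsym -(subnKC (ltnW mn)); apply: le_lt_trans (tele _ _ _) _; exact: hN.
have hC : forall x, {l | converges_to nrmX (fun n => fs n x) l}.
  by move=> x; apply: constructive_indefinite_description; apply: HC; apply: cauchy.
set C := fun x => proj1_sig (hC x).
have Cconv : forall x, converges_to nrmX (fun n => fs n x) (C x) by move=> x; exact: proj2_sig (hC x).
have bound : forall x, nrmX (f x - C x) <= B x.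
  move=> x; apply/ler_addgt0Pr => eps e0.
  have [N hN] := Cconv x eps e0.
  have e : f x - C x = (f x - fs N x) + (fs N x - C x) by rewrite addrA subrK.
  rewrite e; apply: nD.
    rewrite nsym -(fs0 x) -[N]add0n; apply: le_trans (tele _ _ _) _.
    by rewrite expr0 mul1r lerDl ltW.
  by apply: le_trans (ltW (hN N (leqnn N))) _; rewrite lerDr.
have cubic : cubic_map k C.
  move=> x y; apply/nxz; apply/le_anti; rewrite nx0 andbT; apply/ler_addgt0Pr => eps e0.
  rewrite add0r.
  have [N1 h1] := Cconv (kk *: x + y) eps e0.
  have [N2 h2] := Cconv (kk *: x - y) eps e0.
  have [N3 h3] := Cconv (x + y) eps e0.
  have [N4 h4] := Cconv (x - y) eps e0.
  have [N5 h5] := Cconv x eps e0.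
  set bb := delta * (alpha (nrmG x) + alpha (nrmG y)).
  have bb0 : 0 <= bb by apply: mulr_ge0; [apply: ltW | apply: addr_ge0; apply: al0].
  have [N6 h6] := small bb eps bb0 e0.
  set N := maxn N1 (maxn N2 (maxn N3 (maxn N4 (maxn N5 N6)))).
  have e : Dk k C x y = Dk k (fun z => C z - fs N z) x y + Dk k (fs N) x y by rewrite -Dk_sub subrK.
  rewrite e; apply: nD.
    apply: (@Dk_bound _ _ _ G _ _ k _ x y eps HA HN); rewrite nsym; apply: ltW.
    - by apply: h1; rewrite /N !leq_max leqnn ?orbT.
    - by apply: h2; rewrite /N !leq_max leqnn ?orbT.
    - by apply: h3; rewrite /N !leq_max leqnn ?orbT.
    - by apply: h4; rewrite /N !leq_max leqnn ?orbT.
    - by apply: h5; rewrite /N !leq_max leqnn ?orbT.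
  rewrite /fs Dk_scale nxs acn.
  apply: (le_trans (y := ((a ^+ 3)^-1) ^+ N * (delta * (q ^+ N * alpha (nrmG x) + q ^+ N * alpha (nrmG y))))).
    apply: ler_wpM2l; first exact: ainv0.
    apply: le_trans (HD _ _) _; rewrite !gN; apply: ler_wpM2l; first exact: ltW.
    by apply: lerD; apply: alN.
  have -> : ((a ^+ 3)^-1) ^+ N * (delta * (q ^+ N * alpha (nrmG x) + q ^+ N * alpha (nrmG y)))
      = r ^+ N * bb by rewrite /r /bb exprMn; ring.
  by apply: ltW; apply: h6; rewrite /N !leq_max leqnn ?orbT.
have hom : forall g : G -> X, cubic_map k g -> forall x, c *: g (kk *: x) = g x.
  move=> g hg x; have := hg x 0; rewrite Dk_y0 -/kk -/t => /eqP; rewrite subr_eq0 => /eqP e.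
  have ct : c = t^-1 * 2 by rewrite /c /t; field; rewrite kn0 twon0.
  by rewrite ct -scalerA e scalerA mulVf // scale1r.
have homN : forall g : G -> X, cubic_map k g -> forall n x, c ^+ n *: g (kk ^+ n *: x) = g x.
  move=> g hg; elim=> [|n IH] x; first by rewrite !expr0 !scale1r.
  by rewrite shift hom.
exists C; split => //.
move=> C' hC' bC'; apply: functional_extensionality => x.
apply/eqP; rewrite -subr_eq0; apply/eqP/nxz.
apply/le_anti; rewrite nx0 andbT; apply/ler_addgt0Pr => eps e0; rewrite add0r.
have [N hN] := small (B x) eps (B0 x) e0.
have E : C' x - C x = c ^+ N *: (C' (kk ^+ N *: x) - C (kk ^+ N *: x)) by rewrite scalerBr !homN.
rewrite E nxs acn.
have hb : forall y, nrmX (C' y - C y) <= B y.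
  move=> y; have -> : C' y - C y = (f y - C y) - (f y - C' y) by rewrite opprB [RHS]addrC [RHS]addrA subrK.
  by apply: nB; [apply: bound | apply: bC'].
apply: le_trans (ler_wpM2l _ (hb _)) _; first exact: ainv0.
apply: le_trans (scB _ _) _.
exact: ltW (hN N (leqnn N)).
Qed.
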